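(* Let $A\subseteq\mathbb{R}^n$ be finite (Euclidean metric) and $\beta>0$. For all $r,k>0$, $$\mathrm{DCr}^\beta_{r,k}(A)\subseteq\mathrm{Cr}^\beta_{r,k}(A)\subseteq\mathrm{DCr}^\beta_{(2\beta+1)r,k}(A).$$
   Context: $d$ is the Euclidean metric and $\bar B_d(x,r)=\{y:d(x,y)\le r\}$. For finite $A\subseteq\mathbb{R}^n$, $k>0$, $x\in\mathbb{R}^n$, the $k$-core distance $\mathrm{core}^A_k(x)$ is the distance from $x$ to its $\lceil k\rceil$-th nearest neighbor in $A$ (each point of $A$ counted once, $x$ itself counting if $x\in A$); equivalently $\min\{r\ge0:|\bar B_d(x,r)\cap A|\ge k\}$, and $\infty$ if $k>|A|$. For $\beta>0$: $\Lambda^\beta_k(a,x)=\max\{\beta\,\mathrm{core}^A_k(a),d(a,x)\}$, $B^\beta_{r,k}(a)=\{x:\Lambda^\beta_k(a,x)\le r\}$, core bifiltration $\mathrm{Cr}^\beta_{r,k}(A)=\bigcup_{a\in A}B^\beta_{r,k}(a)$. The Voronoi cell of $a\in A$ is $\mathrm{Vor}_A(a)=\{x\in\mathbb{R}^n: d(a,x)\le d(a',x)\text{ for all }a'\in A\}$. The Delaunay core bifiltration is $\mathrm{DCr}^\beta_{r,k}(A)=\bigcup_{a\in A}\big(B^\beta_{r,k}(a)\cap\mathrm{Vor}_A(a)\big)$. *)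

(* Defs.v *)
From HB Require Import structures.
From mathcomp Require Import all_boot all_order all_algebra.
From mathcomp Require Import finmap.
From mathcomp Require Import all_classical all_reals ereal.
Set Implicit Arguments. Unset Strict Implicit. Unset Printing Implicit Defensive.
Import Order.TTheory GRing.Theory Num.Theory.
Local Open Scope classical_set_scope.
Local Open Scope ring_scope.


Definition edist (R : realType) (n : nat) (x y : 'rV[R]_n) : R :=
  Num.sqrt (\sum_(i < n) (x ord0 i - y ord0 i) ^+ 2).

Definition ball_count (R : realType) (n : nat) (A : {fset 'rV[R]_n})
  (x : 'rV[R]_n) (r : R) : nat :=
  #|` [fset y in A | edist x y <= r]%fset|%fset.

(* k-core distance: min { r >= 0 : |B(x,r) ∩ A| >= k }, +oo if no such r. *)
Definition core_dist (R : realType) (n : nat) (A : {fset 'rV[R]_n}) (k : R)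
  (x : 'rV[R]_n) : \bar R :=
  ereal_inf [set (r%:E)%E | r in [set r : R | 0 <= r /\ k <= (ball_count A x r)%:R]].

Definition Lambda (R : realType) (n : nat) (A : {fset 'rV[R]_n}) (beta k : R)
  (a x : 'rV[R]_n) : \bar R :=
  Order.max (beta%:E * core_dist A k a)%E (edist a x)%:E.

Definition core_ball (R : realType) (n : nat) (A : {fset 'rV[R]_n}) (beta r k : R)
  (a : 'rV[R]_n) : set 'rV[R]_n :=
  [set x | (Lambda A beta k a x <= r%:E)%E].

Definition Cr (R : realType) (n : nat) (A : {fset 'rV[R]_n}) (beta r k : R)
  : set 'rV[R]_n :=
  [set x | exists2 a, a \in A & core_ball A beta r k a x].

Definition Vor (R : realType) (n : nat) (A : {fset 'rV[R]_n}) (a : 'rV[R]_n)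
  : set 'rV[R]_n :=
  [set x | forall a', a' \in A -> edist a x <= edist a' x].

Definition DCr (R : realType) (n : nat) (A : {fset 'rV[R]_n}) (beta r k : R)
  : set 'rV[R]_n :=
  [set x | exists2 a, a \in A & (core_ball A beta r k a `&` Vor A a) x].

(* Main.v *)
Require Import Defs.
From HB Require Import structures.
From mathcomp Require Import all_boot all_order all_algebra.
From mathcomp Require Import finmap.
From mathcomp Require Import all_classical all_reals ereal.
From mathcomp Require Import ring lra.
Import Order.TTheory GRing.Theory Num.Theory.
Local Open Scope classical_set_scope.
Local Open Scope ring_scope.
Section Metric.
Variable R : realType.
Variable n : nat.

Lemma cs_sq (u v : 'I_n -> R) :
  (\sum_i u i * v i) ^+ 2 <= (\sum_i u i ^+ 2) * (\sum_i v i ^+ 2).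
Proof.
have H : 0 <= \sum_i \sum_j (u i * v j - u j * v i) ^+ 2.
  by apply: sumr_ge0 => i _; apply: sumr_ge0 => j _; apply: sqr_ge0.
set a := fun i j : 'I_n => u i ^+ 2 * v j ^+ 2.
set b := fun i j : 'I_n => (u i * v i) * (u j * v j).
have E1 : forall i j, (u i * v j - u j * v i) ^+ 2 = a i j + a j i - 2 * b i j.
  by move=> i j; rewrite /a /b; ring.
have Ea : (\sum_i u i ^+ 2) * (\sum_i v i ^+ 2) = \sum_i \sum_j a i j.
  by rewrite big_distrlr.
have Eb : (\sum_i u i * v i) ^+ 2 = \sum_i \sum_j b i j.
  by rewrite expr2 big_distrlr.
have Ea' : \sum_i \sum_j a j i = \sum_i \sum_j a i j by rewrite exchange_big.
have E : \sum_i \sum_j (u i * v j - u j * v i) ^+ 2 =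
   \sum_i \sum_j a i j + \sum_i \sum_j a j i - 2 * \sum_i \sum_j b i j.
  rewrite mulr_sumr -big_split /= -sumrB; apply: eq_bigr => i _.
  rewrite mulr_sumr -big_split /= -sumrB; apply: eq_bigr => j _.
  exact: E1.
rewrite Ea Eb; rewrite E Ea' in H; lra.
Qed.
Lemma edistC (x y : 'rV[R]_n) : edist x y = edist y x.
Proof. by rewrite /edist; congr Num.sqrt; apply: eq_bigr => i _; rewrite -sqrrN opprB. Qed.

Lemma edist_ge0 (x y : 'rV[R]_n) : 0 <= edist x y.
Proof. exact: sqrtr_ge0. Qed.

Lemma edist_tri (x y z : 'rV[R]_n) : edist x z <= edist x y + edist y z.
Proof.
rewrite /edist.
set u := fun i : 'I_n => x ord0 i - y ord0 i.
set v := fun i : 'I_n => y ord0 i - z ord0 i.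
have Ex : \sum_i (x ord0 i - z ord0 i) ^+ 2 =
   \sum_i u i ^+ 2 + 2 * \sum_i u i * v i + \sum_i v i ^+ 2.
  rewrite mulr_sumr -!big_split /=; apply: eq_bigr => i _; rewrite /u /v; ring.
rewrite Ex -/(\sum_i u i ^+ 2) -/(\sum_i v i ^+ 2).
have U0 : 0 <= \sum_i u i ^+ 2 by apply: sumr_ge0 => i _; apply: sqr_ge0.
have V0 : 0 <= \sum_i v i ^+ 2 by apply: sumr_ge0 => i _; apply: sqr_ge0.
have CS : \sum_i u i * v i <= Num.sqrt (\sum_i u i ^+ 2) * Num.sqrt (\sum_i v i ^+ 2).
  rewrite -sqrtrM //.
  apply: (le_trans (ler_norm _)).
  rewrite -sqrtr_sqr ler_sqrt; last by rewrite mulr_ge0.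
  exact: cs_sq.
have SU := sqrtr_ge0 (\sum_i u i ^+ 2).
have SV := sqrtr_ge0 (\sum_i v i ^+ 2).
set S1 := Num.sqrt (\sum_i u i ^+ 2); set S2 := Num.sqrt (\sum_i v i ^+ 2).
have -> : S1 + S2 = Num.sqrt ((S1 + S2) ^+ 2) by rewrite sqrtr_sqr ger0_norm ?addr_ge0.
rewrite ler_sqrt ?sqr_ge0 //.
rewrite sqrrD !sqr_sqrtr //.
rewrite /S1 /S2 -mulr_natl. lra.
Qed.
End Metric.
Lemma count_mono (R : realType) (n : nat) (A : {fset 'rV[R]_n}) (a a' : 'rV[R]_n) (s : R) :
  (ball_count A a s <= ball_count A a' (s + edist a' a))%N.
Proof.
apply: fsubset_leq_card; apply/fsubsetP => y.
rewrite !inE => /andP[-> h] /=.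
apply: le_trans; first exact: (edist_tri _ _ a' a y).
rewrite addrC; exact: lerD.
Qed.

Lemma core_shift (R : realType) (n : nat) (A : {fset 'rV[R]_n}) (k : R) (a a' : 'rV[R]_n) (c : R) :
  (core_dist A k a < c%:E)%E -> (core_dist A k a' < (c + edist a' a)%:E)%E.
Proof.
move=> /ereal_inf_lt [y [s [s0 ks] <-]]; rewrite lte_fin => sc.
apply: (@le_lt_trans _ _ (s + edist a' a)%:E).
  apply: ereal_inf_lbound; exists (s + edist a' a) => //; split.
    by rewrite addr_ge0 // (edist_ge0 _ _).
  apply: (le_trans ks); rewrite ler_nat; exact: count_mono.
by rewrite lte_fin ltrD2r.
Qed.

Lemma nearest (R : realType) (n : nat) (A : {fset 'rV[R]_n}) (a x : 'rV[R]_n) :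
  a \in A -> exists2 a', a' \in A & forall b, b \in A -> edist a' x <= edist b x.
Proof.
move=> ha.
pose F := fun b : A => edist (val b) x.
case: (arg_minP (fun b : A => edist (val b) x) (P := xpredT) (i0 := [` ha]%fset) erefl) => i _ hi.
exists (val i); first exact: valP.
move=> b hb; exact: (hi [` hb]%fset).
Qed.

Theorem mainTheorem5 (R : realType) (n : nat) (A : {fset 'rV[R]_n}) (beta : R)
  (hbeta : 0 < beta) :
  forall r k : R, 0 < r -> 0 < k ->
    DCr A beta r k `<=` Cr A beta r k /\
    Cr A beta r k `<=` DCr A beta ((2 * beta + 1) * r) k.
Proof.
move=> r k r0 k0; split.
  by move=> x [a ha [hb _]]; exists a.
move=> x [a ha]; rewrite /core_ball /Lambda /= ge_max => /andP[hc hd].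
have [a' ha' hmin] := nearest _ _ _ _ x ha.
exists a' => //; split; last by [].
rewrite /core_ball /Lambda /= ge_max; apply/andP; split; last first.
  rewrite lee_fin in hd; rewrite lee_fin. have := hmin a ha; have := mulr_gt0 hbeta r0; lra.
have hd2 : edist a' a <= 2 * r.
  rewrite lee_fin in hd.
  have := edist_tri _ _ a' x a; have := hmin a ha; rewrite (edistC _ _ x a); lra.
case E : (core_dist A k a) hc => [ca| |] hc.
- rewrite -EFinM lee_fin in hc.
  case E' : (core_dist A k a') => [ca'| |].
  + rewrite -EFinM lee_fin.
    have : ca' <= ca + edist a' a.
      apply/ler_addgt0Pr => e e0.
      have := @core_shift _ _ A k a a' (ca + e); rewrite E E' !lte_fin.
      have he : ca < ca + e by rewrite ltrDl.
      move=> /(_ he) h; lra.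
    move=> h; have : beta * ca' <= beta * (ca + edist a' a) by rewrite ler_pM2l.
    have : beta * edist a' a <= beta * (2 * r) by rewrite ler_pM2l.
    lra.
  + have := @core_shift _ _ A k a a' (ca + 1); rewrite E E' lte_fin ltrDl ltr01.
    by move=> /(_ isT).
  + by rewrite gt0_muleNy ?lte_fin // leNye.
- by rewrite gt0_muley ?lte_fin // leye_eq in hc.
- case E' : (core_dist A k a') => [ca'| |].
  + have := @core_shift _ _ A k a a' (ca' - edist a' a); rewrite E E' ltNye subrK ltxx.
    by move=> /(_ isT).
  + have := @core_shift _ _ A k a a' 0; rewrite E E' ltNye.
    by move=> /(_ isT).
  + by rewrite gt0_muleNy ?lte_fin // leNye.
Qed.
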